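(* Let $D\subset\mathbb N$ and let $g_1,g_2:D\to\mathbb R$ satisfy $g_2(n)\ge g_1(n)$ for all $n\in D$, $\lim_{n\to\infty}g_2(n)=-\infty$ and $\lim_{n\to\infty}g_1(n)/n=0$. Let $f:D\to\mathbb R$ be such that there is $n_0\in D$ with $f(n)\ge g_1(n)$ for all $n\in D$, $n\ge n_0$, and suppose $f(n)\le g_2(n)$ for infinitely many $n\in D$. Then $\Omega(f)\ne\emptyset$, the slope set $A_f$ is infinite, and its elements $a_1<a_2<\cdots$ satisfy $\lim_{i\to\infty}a_i=0$.
   Context: Let $D=\{x_0<x_1<x_2<\cdots\}\subset\mathbb R$ be a strictly increasing sequence (finite or infinite) and $f:D\to\mathbb R$. A function $h:D\to\mathbb R$ is convex on $D$ if $h(x)\le \frac{(b-x)h(a)+(x-a)h(b)}{b-a}$ for all $a<x<b$ in $D$. Let $\Omega(f)$ be the set of convex $h:D\to\mathbb R$ with $h\le f$ on $D$. If $\Omega(f)\ne\emptyset$, the lower convex envelope of $f$ is $\breve f(x):=\sup\{h(x):h\in\Omega(f)\}$, a piecewise linear convex function on $D$. Its vertex set $H_f=\{m_0=x_0<m_1<m_2<\cdots\}\subset D$ consists of $x_0$ together with the points of $D$ at which $\breve f=f$ and $\breve f$ changes slope, so that $\breve f$ is linear on $D\cap[m_{i-1},m_i]$ for each $i$. The slope set $A_f=\{a_1<a_2<\cdots\}$ consists of the slopes $a_i=\frac{f(m_i)-f(m_{i-1})}{m_i-m_{i-1}}$ of $\breve f$ on $[m_{i-1},m_i]$; if $D$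 is infinite and $H_f=\{m_0,\dots,m_k\}$ is finite, then $\breve f$ is linear on $D\cap[m_k,\infty)$ and $A_f=\{a_1,\dots,a_k,a_{k+1}\}$, where $a_{k+1}$ is the slope of $\breve f$ on $D\cap[m_k,\infty)$. *)

(* Defs.v *)
From Stdlib Require Import Reals Lra Lia.
Open Scope R_scope.

(* D ⊂ ℕ is given as a predicate D : nat -> Prop; functions on D are
   total functions nat -> R whose values outside D are irrelevant. *)

Definition convex_on (D : nat -> Prop) (h : nat -> R) : Prop :=
  forall a x b : nat, D a -> D x -> D b -> (a < x)%nat -> (x < b)%nat ->
    h x <= ((INR b - INR x) * h a + (INR x - INR a) * h b) / (INR b - INR a).

Definition in_Omega (D : nat -> Prop) (f h : nat -> R) : Prop :=
  convex_on D h /\ (forall x, D x -> h x <= f x).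

Definition is_lce (D : nat -> Prop) (f e : nat -> R) : Prop :=
  forall x, D x -> is_lub (fun y => exists h, in_Omega D f h /\ y = h x) (e x).

Definition slope (e : nat -> R) (p q : nat) : R :=
  (e q - e p) / (INR q - INR p).

Definition consecutive (D : nat -> Prop) (p q : nat) : Prop :=
  D p /\ D q /\ (p < q)%nat /\ (forall k, (p < k < q)%nat -> ~ D k).

Definition is_min (D : nat -> Prop) (m : nat) : Prop :=
  D m /\ (forall x, D x -> (m <= x)%nat).

Definition is_vertex (D : nat -> Prop) (f e : nat -> R) (m : nat) : Prop :=
  is_min D m \/
  (D m /\ e m = f m /\
   exists p s, consecutive D p m /\ consecutive D m s /\ slope e p m <> slope e m s).

Definition in_slope_set (D : nat -> Prop) (f e : nat -> R) (a : R) : Prop :=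
  (exists m m', is_vertex D f e m /\ is_vertex D f e m' /\ (m < m')%nat /\
     (forall k, (m < k < m')%nat -> ~ is_vertex D f e k) /\
     a = (f m' - f m) / (INR m' - INR m))
  \/
  (exists mk, is_vertex D f e mk /\ (forall k, (mk < k)%nat -> ~ is_vertex D f e k) /\
     (forall N, exists n, (N <= n)%nat /\ D n) /\
     (forall x, D x -> (mk <= x)%nat -> e x = e mk + a * (INR x - INR mk))).

(* Main.v *)
Require Import Defs.
From Stdlib Require Import Reals Lra Lia Classical ClassicalEpsilon Wf_nat Arith.
Open Scope R_scope.

Lemma least_ex (P : nat -> Prop) : (exists n, P n) -> exists n, P n /\ forall m, P m -> (n <= m)%nat.
Proof.
  intros [n Hn]. induction n as [n IH] using (well_founded_induction lt_wf).
  destruct (classic (exists m, (m < n)%nat /\ P m)) as [[m [Hm Pm]]|Hno].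
  - exact (IH m Hm Pm).
  - exists n; split; auto. intros m Pm. destruct (le_lt_dec n m); auto.
    exfalso; apply Hno; eauto.
Qed.

Definition nextD (D : nat -> Prop) (Dinf : forall N, exists n, (N <= n)%nat /\ D n) (N : nat) : nat :=
  proj1_sig (constructive_indefinite_description _ (least_ex (fun n => (N <= n)%nat /\ D n) (Dinf N))).

Lemma nextD_spec D Dinf N : ((N <= nextD D Dinf N)%nat /\ D (nextD D Dinf N)) /\
   forall m, ((N <= m)%nat /\ D m) -> (nextD D Dinf N <= m)%nat.
Proof. unfold nextD. destruct (constructive_indefinite_description _ _) as [n Hn]. exact Hn. Qed.

Fixpoint dd D Dinf k := match k with O => nextD D Dinf O | S k' => nextD D Dinf (S (dd D Dinf k')) end.


Lemma dd_D D Dinf k : D (dd D Dinf k).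
Proof. destruct k; simpl; apply nextD_spec. Qed.

Lemma dd_S D Dinf k : (dd D Dinf k < dd D Dinf (S k))%nat.
Proof. simpl. pose proof (nextD_spec D Dinf (S (dd D Dinf k))). lia. Qed.

Lemma dd_next D Dinf k x : D x -> (dd D Dinf k < x)%nat -> (dd D Dinf (S k) <= x)%nat.
Proof. intros. simpl. apply nextD_spec. split; auto; lia. Qed.

Lemma dd_0 D Dinf x : D x -> (dd D Dinf 0 <= x)%nat.
Proof. intros. simpl. apply nextD_spec. split; auto; lia. Qed.

Lemma dd_mono D Dinf j k : (j < k)%nat -> (dd D Dinf j < dd D Dinf k)%nat.
Proof.
  intros H. induction H. apply dd_S. pose proof (dd_S D Dinf m). lia.
Qed.

Lemma dd_ge D Dinf k : (k <= dd D Dinf k)%nat.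
Proof. induction k. lia. pose proof (dd_S D Dinf k). lia. Qed.

Lemma dd_lt_iff D Dinf j k : (dd D Dinf j < dd D Dinf k)%nat -> (j < k)%nat.
Proof. intros H. destruct (le_lt_dec k j); auto.
  destruct (Nat.eq_dec k j). subst; lia. assert (k < j)%nat by lia.
  pose proof (dd_mono D Dinf _ _ H0). lia. Qed.

Lemma dd_surj D Dinf x : D x -> exists k, dd D Dinf k = x.
Proof.
  intros Hx. assert (forall k, (x <= dd D Dinf k)%nat -> exists j, dd D Dinf j = x).
  { induction k; intros Hle.
    - exists 0%nat. pose proof (dd_0 D Dinf x Hx). lia.
    - destruct (le_lt_dec x (dd D Dinf k)). auto.
      exists (S k). pose proof (dd_next D Dinf k x Hx l). lia. }
  apply (H x). apply dd_ge.
Qed.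

Lemma consec_dd D Dinf p q : consecutive D p q <-> exists k, p = dd D Dinf k /\ q = dd D Dinf (S k).
Proof.
  split.
  - intros [Hp [Hq [Hpq Hno]]].
    destruct (dd_surj D Dinf p Hp) as [k Hk]. destruct (dd_surj D Dinf q Hq) as [j Hj]. subst.
    pose proof (dd_lt_iff _ _ _ _ Hpq).
    exists k; split; auto. destruct (Nat.eq_dec j (S k)). subst; auto.
    exfalso. apply (Hno (dd D Dinf (S k))). split. apply dd_S. apply dd_mono. lia. apply dd_D.
  - intros [k [-> ->]]. split. apply dd_D. split. apply dd_D. split. apply dd_S.
    intros x [H1 H2] Hx. pose proof (dd_next D Dinf k x Hx H1). lia.
Qed.

Lemma min_dd D Dinf m : is_min D m <-> m = dd D Dinf 0.
Proof.
  split.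
  - intros [Hm Hle]. pose proof (Hle _ (dd_D D Dinf 0)). pose proof (dd_0 D Dinf m Hm). lia.
  - intros ->. split. apply dd_D. apply dd_0.
Qed.

Definition chR (xa xb x ea eb : R) := ((xb - x) * ea + (x - xa) * eb) / (xb - xa).

Lemma chR_id x0 x1 x2 e0 e1 e2 : x0 < x1 -> x1 < x2 ->
  chR x0 x2 x1 e0 e2 - e1 = (x2-x1)*(x1-x0)/(x2-x0) * ((e2-e1)/(x2-x1) - (e1-e0)/(x1-x0)).
Proof. intros. unfold chR. field. lra. Qed.

Lemma pos_coef x0 x1 x2 : x0 < x1 -> x1 < x2 -> 0 < (x2-x1)*(x1-x0)/(x2-x0).
Proof. intros. unfold Rdiv. apply Rmult_lt_0_compat. apply Rmult_lt_0_compat; lra.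
  apply Rinv_0_lt_compat; lra. Qed.

Lemma conv_slope x0 x1 x2 e0 e1 e2 : x0 < x1 -> x1 < x2 ->
  e1 <= chR x0 x2 x1 e0 e2 -> (e1-e0)/(x1-x0) <= (e2-e1)/(x2-x1).
Proof. intros. pose proof (chR_id x0 x1 x2 e0 e1 e2 H H0). pose proof (pos_coef x0 x1 x2 H H0).
  set (c := (x2 - x1) * (x1 - x0) / (x2 - x0)) in *.
  set (d := ((e2 - e1) / (x2 - x1) - (e1 - e0) / (x1 - x0))) in *.
  assert (0 <= c * d) by lra. assert (0 <= d) by nra. unfold d in *; lra. Qed.

Lemma slope_conv x0 x1 x2 e0 e1 e2 : x0 < x1 -> x1 < x2 ->
  (e1-e0)/(x1-x0) < (e2-e1)/(x2-x1) -> e1 < chR x0 x2 x1 e0 e2.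
Proof. intros. pose proof (chR_id x0 x1 x2 e0 e1 e2 H H0). pose proof (pos_coef x0 x1 x2 H H0).
  assert (0 < (x2 - x1) * (x1 - x0) / (x2 - x0) * ((e2 - e1) / (x2 - x1) - (e1 - e0) / (x1 - x0))).
  apply Rmult_lt_0_compat; lra. lra. Qed.

Lemma chR_aff xa xb p q x ea eb : xa < xb -> p < q ->
  chR xa xb x ea eb = chR p q x (chR xa xb p ea eb) (chR xa xb q ea eb).
Proof. intros. unfold chR. field. lra. Qed.

Lemma chR_le p q x u1 u2 v1 v2 : p < x -> x < q -> u1 <= v1 -> u2 <= v2 -> chR p q x u1 u2 <= chR p q x v1 v2.
Proof. intros. unfold chR, Rdiv. apply Rmult_le_compat_r. left; apply Rinv_0_lt_compat; lra.
  apply Rplus_le_compat; apply Rmult_le_compat_l; lra. Qed.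

Lemma chR_end_l xa xb ea eb : xa < xb -> chR xa xb xa ea eb = ea.
Proof. intros. unfold chR. field. lra. Qed.
Lemma chR_end_r xa xb ea eb : xa < xb -> chR xa xb xb ea eb = eb.
Proof. intros. unfold chR. field. lra. Qed.

Lemma chR_slope xa xb ea eb : xa < xb -> (chR xa xb xb ea eb - ea) = 0 -> True.
Proof. auto. Qed.

Lemma convex_chR D h a x b : convex_on D h -> D a -> D x -> D b -> (a < x)%nat -> (x < b)%nat ->
  h x <= chR (INR a) (INR b) (INR x) (h a) (h b).
Proof. intros Hc; intros. apply Hc; auto. Qed.

Lemma lce_le D f e (H : is_lce D f e) x : D x -> e x <= f x.
Proof. intros Hx. destruct (H x Hx) as [Hub Hl]. apply Hl. intros y [h [[_ Hhf] ->]]. apply Hhf; auto. Qed.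

Lemma lce_ge D f e (H : is_lce D f e) h x : in_Omega D f h -> D x -> h x <= e x.
Proof. intros Hh Hx. apply (proj1 (H x Hx)). exists h; auto. Qed.

Lemma lce_convex D f e (H : is_lce D f e) : convex_on D e.
Proof.
  intros a x b Ha Hx Hb Hax Hxb. destruct (H x Hx) as [_ Hl]. apply Hl.
  intros y [h [[Hc Hhf] ->]]. eapply Rle_trans. apply (Hc a x b); auto.
  apply chR_le; try (apply lt_INR; auto); apply (lce_ge D f e H); auto; split; auto.
Qed.

Lemma raise D f e k v (H : is_lce D f e) : D k -> e k < v -> v <= f k ->
  (forall a b, D a -> D b -> (a < k)%nat -> (k < b)%nat -> v <= chR (INR a) (INR b) (INR k) (e a) (e b)) -> False.
Proof.
  intros Hk Hv Hvf Hch. set (h := fun x => if Nat.eqb x k then v else e x).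
  pose proof (lce_convex D f e H) as Hc.
  assert (Hom : in_Omega D f h).
  { split.
    - intros a x b Ha Hx Hb H1 H2. change (h x <= chR (INR a) (INR b) (INR x) (h a) (h b)). unfold h.
      pose proof (lt_INR _ _ H1). pose proof (lt_INR _ _ H2).
      destruct (Nat.eqb_spec x k), (Nat.eqb_spec a k), (Nat.eqb_spec b k); subst; try lia.
      + apply Hch; auto.
      + eapply Rle_trans. apply (Hc k x b); auto. apply chR_le; lra.
      + eapply Rle_trans. apply (Hc a x k); auto. apply chR_le; lra.
      + apply (Hc a x b); auto.
    - intros x Hx; unfold h; destruct (Nat.eqb_spec x k); subst; auto. apply (lce_le D f e H); auto. }
  pose proof (lce_ge D f e H h k Hom Hk). unfold h in H0; rewrite Nat.eqb_refl in H0. lra.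
Qed.

Lemma dd_inj D Dinf j k : dd D Dinf j = dd D Dinf k -> j = k.
Proof. intros H. destruct (lt_eq_lt_dec j k) as [[h|h]|h]; auto;
  pose proof (dd_mono D Dinf _ _ h); lia. Qed.

Lemma dd_le D Dinf j k : (j <= k)%nat -> (dd D Dinf j <= dd D Dinf k)%nat.
Proof. intros H. destruct (Nat.eq_dec j k). subst; lia. pose proof (dd_mono D Dinf j k). lia. Qed.

Lemma dd_le_iff D Dinf j k : (dd D Dinf j <= dd D Dinf k)%nat -> (j <= k)%nat.
Proof. intros H. destruct (le_lt_dec j k); auto. pose proof (dd_mono D Dinf k j l). lia. Qed.

Definition sl D Dinf (e : nat -> R) k := slope e (dd D Dinf k) (dd D Dinf (S k)).

Lemma INR_dd_lt D Dinf j k : (j < k)%nat -> INR (dd D Dinf j) < INR (dd D Dinf k).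
Proof. intros; apply lt_INR, dd_mono; auto. Qed.

Lemma sl_mono1 D Dinf f e (H : is_lce D f e) k : sl D Dinf e k <= sl D Dinf e (S k).
Proof.
  unfold sl, slope. apply conv_slope. apply INR_dd_lt; lia. apply INR_dd_lt; lia.
  apply (lce_convex D f e H (dd D Dinf k) (dd D Dinf (S k)) (dd D Dinf (S (S k)))); try apply (dd_D D Dinf); apply dd_mono; lia.
Qed.

Lemma sl_mono D Dinf f e (H : is_lce D f e) j k : (j <= k)%nat -> sl D Dinf e j <= sl D Dinf e k.
Proof. intros Hjk. induction Hjk. lra. pose proof (sl_mono1 D Dinf f e H m). lra. Qed.

Lemma chord_mono D e a p x q b : convex_on D e -> D a -> D p -> D q -> D b ->
  (a <= p)%nat -> (p < x)%nat -> (x < q)%nat -> (q <= b)%nat ->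
  chR (INR p) (INR q) (INR x) (e p) (e q) <= chR (INR a) (INR b) (INR x) (e a) (e b).
Proof.
  intros Hc Ha Hp Hq Hb H1 H2 H3 H4.
  assert (Hab : INR a < INR b) by (apply lt_INR; lia).
  assert (Hpq : INR p < INR q) by (apply lt_INR; lia).
  rewrite (chR_aff (INR a) (INR b) (INR p) (INR q) (INR x) (e a) (e b) Hab Hpq).
  apply chR_le; try (apply lt_INR; lia).
  - destruct (Nat.eq_dec a p). subst. rewrite chR_end_l; lra. apply Hc; auto; lia.
  - destruct (Nat.eq_dec q b). subst. rewrite chR_end_r; lra. apply Hc; auto; lia.
Qed.

Lemma vert_eq D Dinf f e (H : is_lce D f e) j : sl D Dinf e j < sl D Dinf e (S j) ->
  e (dd D Dinf (S j)) = f (dd D Dinf (S j)).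
Proof.
  intros Hs. pose proof (lce_le D f e H _ (dd_D D Dinf (S j))).
  destruct H0 as [Hlt|]; auto. exfalso.
  set (C := chR (INR (dd D Dinf j)) (INR (dd D Dinf (S (S j)))) (INR (dd D Dinf (S j)))
              (e (dd D Dinf j)) (e (dd D Dinf (S (S j))))).
  assert (HC : e (dd D Dinf (S j)) < C).
  { unfold C. apply slope_conv. apply INR_dd_lt; lia. apply INR_dd_lt; lia. exact Hs. }
  apply (raise D f e (dd D Dinf (S j)) (Rmin (f (dd D Dinf (S j))) C) H).
  - apply dd_D.
  - apply Rmin_glb_lt; auto.
  - apply Rmin_l.
  - intros a b Ha Hb Hak Hkb. eapply Rle_trans. apply Rmin_r. unfold C.
    destruct (dd_surj D Dinf a Ha) as [ia <-]. destruct (dd_surj D Dinf b Hb) as [ib <-].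
    pose proof (dd_lt_iff _ _ _ _ Hak). pose proof (dd_lt_iff _ _ _ _ Hkb).
    apply (chord_mono D e); try apply (dd_D D Dinf). apply (lce_convex D f e H).
    apply dd_le; lia. apply dd_mono; lia. apply dd_mono; lia. apply dd_le; lia.
Qed.

Lemma vert0 D Dinf f e (H : is_lce D f e) : e (dd D Dinf 0) = f (dd D Dinf 0).
Proof.
  pose proof (lce_le D f e H _ (dd_D D Dinf 0)).
  destruct H0 as [Hlt|]; auto. exfalso.
  apply (raise D f e (dd D Dinf 0) (f (dd D Dinf 0)) H). apply dd_D. auto. lra.
  intros a b Ha Hb Hak. pose proof (dd_0 D Dinf a Ha). lia.
Qed.

Definition VV D Dinf e k := k = 0%nat \/ exists j, k = S j /\ sl D Dinf e j < sl D Dinf e (S j).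

Lemma vertex_iff D Dinf f e (H : is_lce D f e) m :
  is_vertex D f e m <-> exists k, m = dd D Dinf k /\ VV D Dinf e k.
Proof.
  split.
  - intros [Hmin | [Dm [Eeq [p [s [Hp [Hs Hne]]]]]]].
    + exists 0%nat. split. apply (min_dd D Dinf); auto. left; auto.
    + apply (consec_dd D Dinf) in Hp. apply (consec_dd D Dinf) in Hs.
      destruct Hp as [k [-> ->]]. destruct Hs as [k' [Hk' ->]].
      apply dd_inj in Hk'. subst k'.
      exists (S k). split; auto. right. exists k. split; auto.
      pose proof (sl_mono1 D Dinf f e H k). unfold sl in *. lra.
  - intros [k [-> [-> | [j [-> Hj]]]]].
    + left. apply (min_dd D Dinf); auto.
    + right. split. apply dd_D. split. apply (vert_eq D Dinf f e H); auto.
      exists (dd D Dinf j), (dd D Dinf (S (S j))). split. apply (consec_dd D Dinf). eauto.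
      split. apply (consec_dd D Dinf). eauto. unfold sl in Hj. lra.
Qed.

Fixpoint mn (f : nat -> R) eps k := match k with O => 0 | S k => Rmin (mn f eps k) (f k + eps * INR k) end.

Lemma mn_le f eps k x : (x < k)%nat -> mn f eps k <= f x + eps * INR x.
Proof. induction k; intros H. lia. simpl. destruct (Nat.eq_dec x k). subst. apply Rmin_r.
  eapply Rle_trans. apply Rmin_l. apply IHk. lia. Qed.

Lemma mn_nonpos f eps k : mn f eps k <= 0.
Proof. induction k; simpl. lra. eapply Rle_trans. apply Rmin_l. auto. Qed.

Lemma lin_lower (D : nat -> Prop) (g1 f : nat -> R)
  (Hg1 : forall eps : R, 0 < eps ->
           exists N : nat, forall n, D n -> (N <= n)%nat -> Rabs (g1 n / INR n) < eps)
  (Hf1 : exists n0, D n0 /\ forall n, D n -> (n0 <= n)%nat -> g1 n <= f n)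
  eps : 0 < eps -> exists C, forall x, D x -> C - eps * INR x <= f x.
Proof.
  intros Heps. destruct (Hg1 eps Heps) as [N1 HN1]. destruct Hf1 as [n0 [_ Hn0]].
  exists (mn f eps (N1 + n0 + 1)). intros x Hx.
  destruct (le_lt_dec (N1 + n0 + 1) x).
  - pose proof (mn_nonpos f eps (N1 + n0 + 1)).
    assert (Hxp : 0 < INR x) by (apply lt_0_INR; lia).
    pose proof (HN1 x Hx ltac:(lia)). apply Rabs_def2 in H0. destruct H0.
    assert (g1 x = (g1 x / INR x) * INR x) by (field; lra).
    pose proof (Hn0 x Hx ltac:(lia)). nra.
  - pose proof (mn_le f eps _ x l). lra.
Qed.

Lemma affine_convex D C m : convex_on D (fun x => C - m * INR x).
Proof. intros a x b Ha Hx Hb H1 H2. pose proof (lt_INR _ _ H1). pose proof (lt_INR _ _ H2).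
  apply Req_le. field. lra. Qed.

Lemma step D Dinf e k : e (dd D Dinf (S k)) = e (dd D Dinf k) + sl D Dinf e k * (INR (dd D Dinf (S k)) - INR (dd D Dinf k)).
Proof. unfold sl, slope. pose proof (INR_dd_lt D Dinf k (S k) ltac:(lia)). field. lra. Qed.

Lemma tele_ge D Dinf e c n k : (forall i, (k <= i)%nat -> (i < k + n)%nat -> c <= sl D Dinf e i) ->
  e (dd D Dinf (k + n)) >= e (dd D Dinf k) + c * (INR (dd D Dinf (k + n)) - INR (dd D Dinf k)).
Proof.
  induction n; intros Hs. rewrite Nat.add_0_r. lra.
  rewrite Nat.add_succ_r, step. specialize (IHn ltac:(intros; apply Hs; lia)).
  pose proof (Hs (k + n)%nat ltac:(lia) ltac:(lia)).
  pose proof (INR_dd_lt D Dinf (k + n) (S (k + n)) ltac:(lia)).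
  assert (c * (INR (dd D Dinf (S (k + n))) - INR (dd D Dinf (k + n))) <=
          sl D Dinf e (k + n) * (INR (dd D Dinf (S (k + n))) - INR (dd D Dinf (k + n)))).
  { apply Rmult_le_compat_r; lra. } lra.
Qed.

Lemma tele_le D Dinf e c n k : (forall i, (k <= i)%nat -> (i < k + n)%nat -> sl D Dinf e i <= c) ->
  e (dd D Dinf (k + n)) <= e (dd D Dinf k) + c * (INR (dd D Dinf (k + n)) - INR (dd D Dinf k)).
Proof.
  induction n; intros Hs. rewrite Nat.add_0_r. lra.
  rewrite Nat.add_succ_r, step. specialize (IHn ltac:(intros; apply Hs; lia)).
  pose proof (Hs (k + n)%nat ltac:(lia) ltac:(lia)).
  pose proof (INR_dd_lt D Dinf (k + n) (S (k + n)) ltac:(lia)).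
  assert (sl D Dinf e (k + n) * (INR (dd D Dinf (S (k + n))) - INR (dd D Dinf (k + n))) <=
          c * (INR (dd D Dinf (S (k + n))) - INR (dd D Dinf (k + n)))).
  { apply Rmult_le_compat_r; lra. } lra.
Qed.

Lemma sl_neg D Dinf f e g2 (H : is_lce D f e)
  (Hg2 : forall M : R, exists N : nat, forall n, D n -> (N <= n)%nat -> g2 n <= M)
  (Hf2 : forall N : nat, exists n, (N <= n)%nat /\ D n /\ f n <= g2 n) k :
  sl D Dinf e k < 0.
Proof.
  destruct (Rlt_le_dec (sl D Dinf e k) 0) as [|Hge]; auto. exfalso.
  destruct (Hg2 (e (dd D Dinf k) - 1)) as [N HN].
  destruct (Hf2 (N + dd D Dinf k)%nat) as [n [Hn [Dn Hfn]]].
  destruct (dd_surj D Dinf n Dn) as [j <-].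
  assert (Hjk : (k <= j)%nat) by (apply (dd_le_iff D Dinf); lia).
  replace j with (k + (j - k))%nat in * by lia.
  assert (Hall : forall i, (k <= i)%nat -> (i < k + (j - k))%nat -> 0 <= sl D Dinf e i).
  { intros i Hi _. eapply Rle_trans. exact Hge. apply (sl_mono D Dinf f e H). exact Hi. }
  pose proof (tele_ge D Dinf e 0 (j - k) k Hall).
  pose proof (HN _ Dn ltac:(lia)). pose proof (lce_le D f e H _ Dn). lra.
Qed.

Lemma sl_lim D Dinf f e g1 (H : is_lce D f e)
  (Hg1 : forall eps : R, 0 < eps ->
           exists N : nat, forall n, D n -> (N <= n)%nat -> Rabs (g1 n / INR n) < eps)
  (Hf1 : exists n0, D n0 /\ forall n, D n -> (n0 <= n)%nat -> g1 n <= f n)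
  eps : 0 < eps -> exists K, forall k, (K <= k)%nat -> - eps < sl D Dinf e k.
Proof.
  intros Heps. destruct (lin_lower D g1 f Hg1 Hf1 (eps/2) ltac:(lra)) as [C HC].
  assert (Hom : in_Omega D f (fun x => C - eps/2 * INR x)) by (split; [apply affine_convex | auto]).
  destruct (INR_archimed (eps/2) (e (dd D Dinf 0) + eps * INR (dd D Dinf 0) - C) ltac:(lra)) as [K HK].
  exists K. intros k Hk. destruct (Rlt_le_dec (- eps) (sl D Dinf e k)) as [|Hle]; auto. exfalso.
  assert (Hall : forall i, (0 <= i)%nat -> (i < 0 + k)%nat -> sl D Dinf e i <= - eps).
  { intros i _ Hi. eapply Rle_trans. apply (sl_mono D Dinf f e H). apply Nat.lt_le_incl; exact Hi. exact Hle. }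
  pose proof (tele_le D Dinf e (-eps) k 0 Hall).
  rewrite Nat.add_0_l in H0.
  pose proof (lce_ge D f e H _ (dd D Dinf k) Hom (dd_D D Dinf k)). simpl in H1.
  assert (INR K <= INR (dd D Dinf k)) by (apply le_INR; pose proof (dd_ge D Dinf k); lia).
  assert (0 <= eps/2 * (INR (dd D Dinf k) - INR K)) by (apply Rmult_le_pos; lra).
  lra.
Qed.

Definition nxt D Dinf e (Hx : forall j, exists m, sl D Dinf e j < sl D Dinf e m) j : nat :=
  proj1_sig (constructive_indefinite_description _ (least_ex _ (Hx j))).

Lemma nxt_spec D Dinf e Hx j : sl D Dinf e j < sl D Dinf e (nxt D Dinf e Hx j) /\
  forall m, sl D Dinf e j < sl D Dinf e m -> (nxt D Dinf e Hx j <= m)%nat.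
Proof. unfold nxt. destruct (constructive_indefinite_description _ _) as [n Hn]. exact Hn. Qed.

Fixpoint JJ D Dinf e Hx i : nat := match i with O => O | S i => nxt D Dinf e Hx (JJ D Dinf e Hx i) end.

Lemma nxt_gt D Dinf f e (H : is_lce D f e) Hx j : (j < nxt D Dinf e Hx j)%nat.
Proof. destruct (nxt_spec D Dinf e Hx j) as [H1 _].
  destruct (le_lt_dec (nxt D Dinf e Hx j) j); auto.
  pose proof (sl_mono D Dinf f e H _ _ l). lra. Qed.

Lemma nxt_const D Dinf f e (H : is_lce D f e) Hx j m : (j <= m)%nat -> (m < nxt D Dinf e Hx j)%nat ->
  sl D Dinf e m = sl D Dinf e j.
Proof. intros H1 H2. destruct (nxt_spec D Dinf e Hx j) as [_ H3].
  pose proof (sl_mono D Dinf f e H _ _ H1).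
  destruct (Rlt_le_dec (sl D Dinf e j) (sl D Dinf e m)). pose proof (H3 m r). lia. lra. Qed.

Lemma JJ_S D Dinf f e (H : is_lce D f e) Hx i : (JJ D Dinf e Hx i < JJ D Dinf e Hx (S i))%nat.
Proof. simpl. apply (nxt_gt D Dinf f e H). Qed.

Lemma JJ_mono D Dinf f e (H : is_lce D f e) Hx i i' : (i < i')%nat -> (JJ D Dinf e Hx i < JJ D Dinf e Hx i')%nat.
Proof. intros Hi. induction Hi. apply (JJ_S D Dinf f e H). pose proof (JJ_S D Dinf f e H Hx m). lia. Qed.

Lemma JJ_lt_iff D Dinf f e (H : is_lce D f e) Hx i i' : (JJ D Dinf e Hx i < JJ D Dinf e Hx i')%nat -> (i < i')%nat.
Proof. intros Hl. destruct (le_lt_dec i' i); auto. destruct (Nat.eq_dec i' i). subst; lia.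
  pose proof (JJ_mono D Dinf f e H Hx i' i ltac:(lia)). lia. Qed.

Lemma JJ_ge D Dinf f e (H : is_lce D f e) Hx i : (i <= JJ D Dinf e Hx i)%nat.
Proof. induction i. simpl; lia. pose proof (JJ_S D Dinf f e H Hx i). lia. Qed.

Lemma JJ_cover D Dinf f e (H : is_lce D f e) Hx j : exists i, (JJ D Dinf e Hx i <= j)%nat /\ (j < JJ D Dinf e Hx (S i))%nat.
Proof.
  induction j.
  - exists 0%nat. split. simpl; lia. apply (JJ_S D Dinf f e H Hx 0).
  - destruct IHj as [i [H1 H2]]. destruct (Nat.eq_dec (S j) (JJ D Dinf e Hx (S i))).
    + exists (S i). split. lia. rewrite e0. apply (JJ_S D Dinf f e H).
    + exists i. split; lia.
Qed.

Lemma JJ_const D Dinf f e (H : is_lce D f e) Hx i m : (JJ D Dinf e Hx i <= m)%nat -> (m < JJ D Dinf e Hx (S i))%nat ->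
  sl D Dinf e m = sl D Dinf e (JJ D Dinf e Hx i).
Proof. intros. apply (nxt_const D Dinf f e H Hx); auto. Qed.

Lemma VV_iff D Dinf f e (H : is_lce D f e) Hx k : VV D Dinf e k <-> exists i, k = JJ D Dinf e Hx i.
Proof.
  split.
  - intros [-> | [j [-> Hj]]]. exists 0%nat; auto.
    destruct (JJ_cover D Dinf f e H Hx j) as [i [H1 H2]].
    pose proof (JJ_const D Dinf f e H Hx i j H1 H2).
    exists (S i). simpl. simpl in H2. destruct (nxt_spec D Dinf e Hx (JJ D Dinf e Hx i)) as [_ H3].
    assert (nxt D Dinf e Hx (JJ D Dinf e Hx i) <= S j)%nat by (apply H3; lra). lia.
  - intros [i ->]. destruct i. left; auto. right. simpl.
    pose proof (nxt_gt D Dinf f e H Hx (JJ D Dinf e Hx i)).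
    destruct (nxt D Dinf e Hx (JJ D Dinf e Hx i)) as [|j] eqn:En. lia.
    exists j. split; auto.
    pose proof (nxt_const D Dinf f e H Hx (JJ D Dinf e Hx i) j ltac:(lia) ltac:(lia)).
    destruct (nxt_spec D Dinf e Hx (JJ D Dinf e Hx i)) as [H3 _]. rewrite En in H3. lra.
Qed.

Lemma vert_JJ D Dinf f e (H : is_lce D f e) Hx m : is_vertex D f e m <-> exists i, m = dd D Dinf (JJ D Dinf e Hx i).
Proof.
  rewrite (vertex_iff D Dinf f e H). split.
  - intros [k [-> Hk]]. apply (VV_iff D Dinf f e H Hx) in Hk. destruct Hk as [i ->]. eauto.
  - intros [i ->]. exists (JJ D Dinf e Hx i). split; auto. apply (VV_iff D Dinf f e H Hx). eauto.
Qed.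

Lemma fv D Dinf f e (H : is_lce D f e) Hx i : f (dd D Dinf (JJ D Dinf e Hx i)) = e (dd D Dinf (JJ D Dinf e Hx i)).
Proof.
  destruct i. simpl. symmetry. apply (vert0 D Dinf f e H).
  assert (VV D Dinf e (JJ D Dinf e Hx (S i))) by (apply (VV_iff D Dinf f e H Hx); eauto).
  destruct H0 as [Hz | [j [Hj Hs]]].
  - pose proof (JJ_S D Dinf f e H Hx i). lia.
  - rewrite Hj. symmetry. apply (vert_eq D Dinf f e H); auto.
Qed.

Lemma chordJ D Dinf f e (H : is_lce D f e) Hx i :
  (e (dd D Dinf (JJ D Dinf e Hx (S i))) - e (dd D Dinf (JJ D Dinf e Hx i))) /
  (INR (dd D Dinf (JJ D Dinf e Hx (S i))) - INR (dd D Dinf (JJ D Dinf e Hx i))) = sl D Dinf e (JJ D Dinf e Hx i).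
Proof.
  set (p := JJ D Dinf e Hx i). set (q := JJ D Dinf e Hx (S i)).
  assert (Hpq : (p < q)%nat) by apply (JJ_S D Dinf f e H).
  set (c := sl D Dinf e p).
  assert (Hc : forall m, (p <= m)%nat -> (m < p + (q - p))%nat -> sl D Dinf e m = c).
  { intros m H1 H2. apply (JJ_const D Dinf f e H Hx); unfold p, q in *; lia. }
  pose proof (tele_ge D Dinf e c (q - p) p ltac:(intros m H1 H2; rewrite (Hc m H1 H2); lra)).
  pose proof (tele_le D Dinf e c (q - p) p ltac:(intros m H1 H2; rewrite (Hc m H1 H2); lra)).
  replace (p + (q - p))%nat with q in * by lia.
  pose proof (INR_dd_lt D Dinf p q Hpq).
  assert (e (dd D Dinf q) = e (dd D Dinf p) + c * (INR (dd D Dinf q) - INR (dd D Dinf p))) by lra.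
  rewrite H3. field. lra.
Qed.

Theorem lemma5 (D : nat -> Prop) (g1 g2 f : nat -> R)
  (Hg12 : forall n, D n -> g1 n <= g2 n)
  (Hg2 : forall M : R, exists N : nat, forall n, D n -> (N <= n)%nat -> g2 n <= M)
  (Hg1 : forall eps : R, 0 < eps ->
           exists N : nat, forall n, D n -> (N <= n)%nat -> Rabs (g1 n / INR n) < eps)
  (Hf1 : exists n0, D n0 /\ forall n, D n -> (n0 <= n)%nat -> g1 n <= f n)
  (Hf2 : forall N : nat, exists n, (N <= n)%nat /\ D n /\ f n <= g2 n) :
  (exists h, in_Omega D f h) /\
  (exists e, is_lce D f e) /\
  (forall e, is_lce D f e ->
     exists a : nat -> R,
       (forall i, a i < a (S i)) /\
       (forall y, in_slope_set D f e y <-> exists i, y = a i) /\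
       Un_cv a 0).
Proof.
  assert (Dinf : forall N, exists n, (N <= n)%nat /\ D n).
  { intros N. destruct (Hf2 N) as [n [H1 [H2 _]]]. eauto. }
  assert (Hom : exists h, in_Omega D f h).
  { destruct (lin_lower D g1 f Hg1 Hf1 1 ltac:(lra)) as [C HC].
    exists (fun x => C - 1 * INR x). split. apply affine_convex. auto. }
  split; [exact Hom|]. split.
  - destruct Hom as [h0 Hh0].
    assert (Hex : forall x, exists l, D x -> is_lub (fun y => exists h, in_Omega D f h /\ y = h x) l).
    { intros x. destruct (classic (D x)) as [Dx|nDx].
      - destruct (completeness (fun y => exists h, in_Omega D f h /\ y = h x)) as [l Hl].
        + exists (f x). intros y [h [[_ Hh] ->]]. auto.
        + exists (h0 x). eauto.
        + exists l; auto.
      - exists 0. intros; contradiction. }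
    exists (fun x => proj1_sig (constructive_indefinite_description _ (Hex x))).
    intros x Dx. destruct (constructive_indefinite_description _ (Hex x)) as [l Hl]. simpl. auto.
  - intros e He.
    assert (Hx : forall j, exists m, sl D Dinf e j < sl D Dinf e m).
    { intros j. pose proof (sl_neg D Dinf f e g2 He Hg2 Hf2 j).
      destruct (sl_lim D Dinf f e g1 He Hg1 Hf1 (- sl D Dinf e j) ltac:(lra)) as [K HK].
      exists K. pose proof (HK K (le_n K)). lra. }
    exists (fun i => sl D Dinf e (JJ D Dinf e Hx i)). split; [|split].
    + intros i. simpl. apply nxt_spec.
    + intros y. split.
      * intros [[m [m' [Hm [Hm' [Hlt [Hno ->]]]]]] | [mk [Hmk [Hno _]]]].
        -- apply (vert_JJ D Dinf f e He Hx) in Hm. apply (vert_JJ D Dinf f e He Hx) in Hm'.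
           destruct Hm as [i ->]. destruct Hm' as [i' ->].
           pose proof (dd_lt_iff _ _ _ _ Hlt) as Hl. apply (JJ_lt_iff D Dinf f e He Hx) in Hl.
           destruct (Nat.eq_dec i' (S i)).
           ++ subst i'. exists i. rewrite !(fv D Dinf f e He Hx). apply (chordJ D Dinf f e He Hx).
           ++ exfalso. apply (Hno (dd D Dinf (JJ D Dinf e Hx (S i)))).
              split; apply dd_mono; apply (JJ_mono D Dinf f e He Hx); lia.
              apply (vert_JJ D Dinf f e He Hx). eauto.
        -- exfalso. apply (vert_JJ D Dinf f e He Hx) in Hmk. destruct Hmk as [i ->].
           apply (Hno (dd D Dinf (JJ D Dinf e Hx (S i)))).
           apply dd_mono; apply (JJ_S D Dinf f e He Hx).
           apply (vert_JJ D Dinf f e He Hx). eauto.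
      * intros [i ->]. left. exists (dd D Dinf (JJ D Dinf e Hx i)), (dd D Dinf (JJ D Dinf e Hx (S i))).
        split. apply (vert_JJ D Dinf f e He Hx); eauto.
        split. apply (vert_JJ D Dinf f e He Hx); eauto.
        split. apply dd_mono; apply (JJ_S D Dinf f e He Hx).
        split.
        -- intros k [H1 H2] Hk. apply (vert_JJ D Dinf f e He Hx) in Hk. destruct Hk as [i'' ->].
           apply dd_lt_iff, (JJ_lt_iff D Dinf f e He Hx) in H1.
           apply dd_lt_iff, (JJ_lt_iff D Dinf f e He Hx) in H2. lia.
        -- rewrite !(fv D Dinf f e He Hx). symmetry. apply (chordJ D Dinf f e He Hx).
    + intros eps Heps. destruct (sl_lim D Dinf f e g1 He Hg1 Hf1 eps Heps) as [K HK].
      exists K. intros n Hn. unfold R_dist. rewrite Rminus_0_r.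
      pose proof (sl_neg D Dinf f e g2 He Hg2 Hf2 (JJ D Dinf e Hx n)).
      pose proof (HK (JJ D Dinf e Hx n) ltac:(pose proof (JJ_ge D Dinf f e He Hx n); lia)).
      rewrite Rabs_left; lra.
Qed.
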